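(* (a) For every integer $B\ge1$ there is a deterministic exploration algorithm which, knowing only $B$ (and not $n$ or $k$), solves PVG-Exploration of every feasible anonymous PV graph (homogeneous or heterogeneous, with arbitrary routes) whose period satisfies $p\le B$, and in which the agent performs at most $(3k-2)B^2$ moves, where $k$ is the number of carriers. (b) For every integer $B\ge1$ there is a deterministic exploration algorithm which, knowing only $B$ and that the system is homogeneous, solves PVG-Exploration of every feasible anonymous homogeneous PV graph with period $p\le B$, performing at most $(3k-2)B$ moves.
   Context: A PV (periodically varying) system consists of a finite set $S$ of $n$ sites and a set $C$ of $k\le n$ carriers. Each carrier $c$ has a distinct identifier and a route $\pi(c)=\langle x_0,\dots,x_{p(c)-1}\rangle$, a finite sequence of sites (repetitions allowed) of length $p(c)\ge 1$ called its period; $\pi(c)[j]=x_{j \bmod p(c)}$. At each time $t\in\mathbb{N}$ carrier $c$ is at site $\pi(c)[t]$ and moves to $\pi(c)[t+1]$. The PV graph $\vec G_R$ is the directed edge-labelled multigraph on $S$ with edges $(x_i,x_{i+1},i)$, $0\le i<p(c)$, for every carrier. Its period is $p=\max_{c}p(c)$; it is homogeneous if all periods are equal, heterogeneous otherwise. In an anonymous system sites are indistinguishable to the agent. An exploring agent is injected at time $0$ at a site of $\mathrm{start}(\vec G_R)=\{\pi(c)[0]:c\in C\}$. If at time $t$ the agent is at site $x$, it must either choose a carrier $c$ with $\pi(c)[t]=x$ and ride with it to $\pi(c)[t+1]$ (one move), or halt and exit; it cannot wait at a site. At each time the agent observes only the identifiers of the carriers present at its current site. An exploration algorithm is a deterministic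 rule mapping the agent's a priori knowledge and history of observations to its next action. An algorithm solves PVG-Exploration of $\vec G_R$ if from every injection site the agent visits every site of $S$ and halts after finitely many moves. $\vec G_R$ is feasible if from the starting point of every carrier there exists a walk realizable by the agent (riding carriers and switching between carriers at the same site at the same time) visiting all sites. *)

(* Defs.v *)
From mathcomp Require Import all_boot.
Set Implicit Arguments. Unset Strict Implicit. Unset Printing Implicit Defensive.

(* Sites are the naturals 0..n-1.  A carrier is a pair (identifier, route);
   the route is a nonempty sequence of sites whose length is the period. *)
Definition carrier := (nat * seq nat)%type.
Definition cid (c : carrier) : nat := c.1.
Definition route (c : carrier) : seq nat := c.2.
Definition cperiod (c : carrier) : nat := size (route c).

Definition pos (c : carrier) (t : nat) : nat :=
  nth 0 (route c) (t %% cperiod c).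

Definition pv_system (n : nat) (G : seq carrier) : bool :=
  [&& uniq (map cid G),
      all (fun c => 0 < cperiod c) G,
      all (fun c => all (fun x => x < n) (route c)) G
    & size G <= n].

Definition period (G : seq carrier) : nat := \max_(c <- G) cperiod c.

Definition homogeneous (G : seq carrier) : bool :=
  all (fun c => all (fun d => cperiod c == cperiod d) G) G.

Definition start (G : seq carrier) : seq nat := [seq pos c 0 | c <- G].

Fixpoint valid_walk (G : seq carrier) (x t : nat) (cs : seq carrier) : bool :=
  match cs with
  | [::] => true
  | c :: cs' => [&& c \in G, pos c t == x & valid_walk G (pos c t.+1) t.+1 cs']
  end.

Fixpoint walk_sites (x t : nat) (cs : seq carrier) : seq nat :=
  match cs with
  | [::] => [:: x]
  | c :: cs' => x :: walk_sites (pos c t.+1) t.+1 cs'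
  end.

Definition feasible (n : nat) (G : seq carrier) : Prop :=
  forall c, c \in G -> exists cs : seq carrier,
    valid_walk G (pos c 0) 0 cs /\
    forall y, y < n -> y \in walk_sites (pos c 0) 0 cs.

(* Anonymous observation: the (sorted) identifiers of carriers at site x at time t *)
Definition obs (G : seq carrier) (t x : nat) : seq nat :=
  sort leq [seq cid c | c <- G & pos c t == x].

(* An exploration algorithm: maps the history of observations (including the
   current one) to an action: Some i = ride carrier with identifier i,
   None = halt. *)
Definition algorithm := seq (seq nat) -> option nat.

Definition carrier_of (G : seq carrier) (i : nat) : carrier :=
  nth (0, [::]) G (index i (map cid G)).

(* Returns Some (visited sites) if the
   agent halts after at most [fuel] moves having always chosen a carrier present
   at its current site; None otherwise (too many moves or invalid choice). *)
Fixpoint run (A : algorithm) (G : seq carrier) (x t : nat)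
    (h : seq (seq nat)) (fuel : nat) : option (seq nat) :=
  let o := obs G t x in
  let h' := rcons h o in
  match A h' with
  | None => Some [:: x]
  | Some i =>
      match fuel with
      | 0 => None
      | f.+1 =>
          if i \in o then
            match run A G (pos (carrier_of G i) t.+1) t.+1 h' f with
            | Some v => Some (x :: v)
            | None => None
            end
          else None
      end
  end.

Definition explores_within (A : algorithm) (n : nat) (G : seq carrier) (M : nat) : Prop :=
  forall x0, x0 \in start G ->
    exists v, run A G x0 0 [::] M = Some v /\ forall y, y < n -> y \in v.

(* Main.v *)
Require Import Defs.
From mathcomp Require Import all_boot.
From Stdlib Require Import Lia.
Ltac tolia := rewrite -?multE -?plusE -?minusE.
Set Implicit Arguments. Unset Strict Implicit. Unset Printing Implicit Defensive.

Inductive mode := MInit | MExplore of nat | MDecide | MSeek of nat | MRet of nat.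
Record St := mkSt { smode : mode; scur : nat; svis : seq nat; sstk : seq (nat * seq nat) }.

Definition explore_step (r : nat) (s : St) (o : seq nat) : St * option nat :=
  (mkSt (if r is r'.+2 then MExplore r'.+1 else MDecide) (scur s) (svis s)
     (if sstk s is (c,p)::rest then (c, o ++ p)::rest else [::]), Some (scur s)).

Definition decide (s : St) : St * option nat :=
  match sstk s with
  | (c, pend) :: rest =>
     match [seq d <- pend | d \notin svis s] with
     | d :: _ => (mkSt (MSeek d) c (svis s) (sstk s), Some c)
     | [::] => match rest with
               | (p, _) :: _ => (mkSt (MRet p) c (svis s) rest, Some c)
               | [::] => (s, None) end end
  | [::] => (s, None) end.

Definition step (W : nat) (s : St) (o : seq nat) : St * option nat :=
  match smode s with
  | MInit => if o is i :: _ then explore_step W (mkSt MDecide i [:: i] [:: (i, [::])]) o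
             else (s, None)
  | MExplore r => explore_step r s o
  | MDecide => decide s
  | MSeek d => if d \in o then explore_step W (mkSt MDecide d (d :: svis s) ((d, [::]) :: sstk s)) o
               else (s, Some (scur s))
  | MRet p => if p \in o then decide (mkSt MDecide p (svis s) (sstk s))
              else (s, Some (scur s))
  end.

Definition s0 := mkSt MInit 0 [::] [::].
Definition SS (W : nat) (h : seq (seq nat)) := foldl (fun ps o => step W ps.1 o) (s0, None) h.
Definition Alg (W : nat) : algorithm := fun h => (SS W h).2.

Fixpoint runM (W : nat) (G : seq carrier) (s : St) (x t : nat) (fuel : nat) : option (seq nat) :=
  let o := obs G t x in
  match step W s o with
  | (_, None) => Some [:: x]
  | (s', Some i) =>
      match fuel with
      | 0 => None
      | f.+1 =>
          if i \in o then
            match runM W G s' (pos (carrier_of G i) t.+1) t.+1 f with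
            | Some v => Some (x :: v)
            | None => None
            end
          else None
      end
  end.

Lemma run_runM W G f : forall h x t,
  run (Alg W) G x t h f = runM W G (SS W h).1 x t f.
Proof.
elim: f => [|f IH] h x t /=; rewrite /Alg /SS foldl_rcons /=;
  case E: (step W _ _) => [s' [i|]] //=.
case: ifP => // _.
have := IH (rcons h (obs G t x)) (pos (carrier_of G i) t.+1) t.+1.
rewrite /Alg /SS foldl_rcons E /= => ->. by [].
Qed.
Lemma arF W x F: 0 < W -> 0 < x -> W * x <= F -> exists F', F = F'.+1.
Proof. case: F => [|F] h1 h2; last by exists F. by rewrite leqn0 muln_eq0 => /orP[] /eqP e; [move: h1|move: h2]; rewrite e. Qed.
Lemma fuel_seek W a b F m: 0 < a -> m < W -> W*(3*a + b - 1) <= F.+1 ->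
  [/\ m <= F, W <= F - m & W*(3*(a.-1) + b.+1 - 1) <= F - m - W].
Proof.
case: a => // a _ /=. move=> /ltP h1 /leP h2; split; apply/leP; move: h1 h2; tolia; nia. Qed.
Lemma fuel_ret W a b F m: 1 < b -> m < W -> W*(3*a + b - 1) <= F.+1 ->
  m <= F /\ W*(3*a + b.-1 - 1) <= F - m.
Proof.
case: b => // [[//|b]] _ /=. move=> /ltP h1 /leP h2; split; apply/leP; move: h1 h2; tolia; nia. Qed.
Lemma meas_seek a b N : 0 < a -> 2*a + b <= N.+1 -> 2*(a.-1) + b.+1 <= N.
Proof. move=> /ltP h1 /leP h2; apply/leP; move: h1 h2; tolia; lia. Qed.
Lemma meas_ret a b N : 2*a + b.+2 <= N.+1 -> 2*a + b.+1 <= N.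
Proof. move=> /leP h2; apply/leP; move: h2; tolia; lia. Qed.
Lemma pos3 a b : 0 < a -> 0 < 3*a + b - 1.
Proof. move=> /ltP h; apply/ltP; move: h; tolia; lia. Qed.
Lemma fuel_top W k : 0 < k -> (3 * k - 2) * W = W * (3 * (k - 1) + 1 - 1) + W.
Proof. move=> /ltP h; move: h; tolia; nia. Qed.
Lemma meas_top k : 2 * (k - 1) + 1 <= 2 * k + 1.
Proof. apply/leP; tolia; lia. Qed.


Section Proofs.
Variable W : nat.
Variable G : seq carrier.
Hypothesis HW : 0 < W.
Hypothesis Huniq : uniq (map cid G).
Hypothesis Hper : forall c d, c \in G -> d \in G -> exists2 q, 0 < q <= W &
  forall u, pos c (u + q) = pos c u /\ pos d (u + q) = pos d u.

Local Notation ids := (map cid G).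
Local Notation car := (carrier_of G).

Lemma cid_inj c d : c \in G -> d \in G -> cid c = cid d -> c = d.
Proof.
move: Huniq; elim: G => //= x s IH /andP[nx us].
rewrite !inE => /predU1P[->|cs] /predU1P[->|ds] e //.
- by move: nx; rewrite e (map_f cid ds).
- by move: nx; rewrite -e (map_f cid cs).
- exact: IH.
Qed.

Lemma car_cid c : c \in G -> car (cid c) = c.
Proof.
move=> cG; rewrite /carrier_of.
have im : cid c \in ids by apply: map_f.
have lt : index (cid c) ids < size G by rewrite -(size_map cid) index_mem.
apply: cid_inj => //; first exact: mem_nth.
by rewrite -(nth_map _ 0) // nth_index.
Qed.

Lemma car_in i : i \in ids -> car i \in G /\ cid (car i) = i.
Proof. by case/mapP=> c cG ->; rewrite car_cid. Qed.

Lemma mem_obs i t x : (i \in obs G t x) = (i \in ids) && (pos (car i) t == x).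
Proof.
rewrite /obs mem_sort; apply/mapP/andP.
- case=> c; rewrite mem_filter => /andP[/eqP px cG] ->.
  by rewrite car_cid // map_f // px.
- case=> ii /eqP px; exists (car i); last by case: (car_in ii).
  by rewrite mem_filter px eqxx; case: (car_in ii).
Qed.

Definition meets i j := exists u, pos (car i) u = pos (car j) u.

Lemma meets_sym i j : meets i j -> meets j i.
Proof. by case=> u e; exists u. Qed.

Lemma per_window c d u t : c \in G -> d \in G ->
  exists2 m, m < W & pos c u = pos c (t + m) /\ pos d u = pos d (t + m).
Proof.
move=> cG dG; case: (Hper cG dG) => q /andP[q0 qW] hq.
have it : forall a k, pos c (a + k * q) = pos c a /\ pos d (a + k * q) = pos d a.
  move=> a; elim=> [|k [IH1 IH2]]; first by rewrite mul0n addn0.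
  rewrite mulSn (addnC q) addnA; case: (hq (a + k * q)) => -> ->; by [].
set s := u + t * q.
have ts : t <= s by rewrite /s -{1}[t]muln1 (leq_trans (leq_mul (leqnn t) q0)) // leq_addl.
set m := (s - t) %% q; set k := (s - t) %/ q.
exists m; first by apply: leq_trans qW; rewrite ltn_mod.
have e : s = t + m + k * q.
  by rewrite -addnA (addnC m) -divn_eq subnKC.
case: (it u t) => <- <-; rewrite -/s.
by case: (it (t + m) k) => <- <-; rewrite -e.
Qed.

Lemma meets_window i j t : i \in ids -> j \in ids -> meets i j ->
  exists2 m, m < W & pos (car j) (t + m) = pos (car i) (t + m).
Proof.
move=> ii jj [u e]; case: (car_in ii) => iG _; case: (car_in jj) => jG _.
case: (per_window u t iG jG) => m mW [e1 e2]; exists m => //.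
by rewrite -e1 -e2 e.
Qed.

Lemma cover_window i t u : i \in ids ->
  exists2 m, m < W & pos (car i) u = pos (car i) (t + m).
Proof.
move=> ii; case: (car_in ii) => iG _.
by case: (per_window u t iG iG) => m mW [e1 _]; exists m.
Qed.


Definition closedV (V : seq nat) :=
  forall i, i \in V -> forall j, j \in ids -> meets i j -> j \in V.

Definition Good (V0 : seq nat) (H : nat -> Prop) (v : seq nat) :=
  exists Vf : seq nat, [/\ {subset V0 <= Vf}, {subset Vf <= ids}, closedV Vf &
    forall i, i \in Vf -> forall u, H (pos (car i) u) \/ pos (car i) u \in v].

Definition Concl V0 s x t F H := exists v, runM W G s x t F = Some v /\ Good V0 H v.

Lemma runM_fuel s x t F F' v : F <= F' -> runM W G s x t F = Some v -> runM W G s x t F' = Some v.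
Proof.
elim: F s x t F' v => [|F IH] s x t [|F'] v //= le;
  case: (step W s (obs G t x)) => s' [i|] //.
case: ifP => // _.
case E: (runM W G s' _ _ F) => [v'|] // [<-].
by rewrite (IH _ _ _ _ _ le E).
Qed.

Lemma Concl_fuel V0 s x t F F' H : F <= F' -> Concl V0 s x t F H -> Concl V0 s x t F' H.
Proof. by move=> le [v [e g]]; exists v; split=> //; apply: runM_fuel e. Qed.

Lemma Concl_mono V0 V0' s x t F (H1 H2 : nat -> Prop) :
  (forall y, H1 y -> H2 y) -> {subset V0' <= V0} ->
  Concl V0 s x t F H1 -> Concl V0' s x t F H2.
Proof.
move=> hH hV [v [e [Vf [s1 s2 s3 s4]]]]; exists v; split=> //; exists Vf; split=> //.
- by move=> i /hV /s1.
- by move=> i /s4 h u; case: (h u) => [/hH|]; [left|right].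
Qed.

Lemma Concl_step V0 s s' x t F H i :
  step W s (obs G t x) = (s', Some i) -> i \in obs G t x ->
  Concl V0 s' (pos (car i) t.+1) t.+1 F (fun y => H y \/ y = x) ->
  Concl V0 s x t F.+1 H.
Proof.
move=> e io [v [e' [Vf [s1 s2 s3 s4]]]]; exists (x :: v); split.
  by rewrite /= e io e'.
exists Vf; split=> // j /s4 h u; case: (h u) => [[|->]|]; first by left.
  by right; rewrite inE eqxx.
by move=> hv; right; rewrite inE hv orbT.
Qed.

Lemma Concl_halt V0 s s' x t F H :
  step W s (obs G t x) = (s', None) -> Good V0 H [:: x] -> Concl V0 s x t F H.
Proof. by move=> e g; exists [:: x]; case: F => [|F]; rewrite /= e. Qed.

Lemma Concl_wait V0 s c tau : scur s = c -> c \in ids -> tau \in ids ->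
  (forall o, tau \notin o -> step W s o = (s, Some c)) ->
  forall m t F H, (forall i, i < m -> pos (car tau) (t + i) != pos (car c) (t + i)) ->
  Concl V0 s (pos (car c) (t + m)) (t + m) F H ->
  Concl V0 s (pos (car c) t) t (F + m) H.
Proof.
move=> sc ci ti hs; elim=> [|m IH] t F H hne hC; first by move: hC; rewrite !addn0.
have h0 := hne 0 (ltn0Sn m); rewrite addn0 in h0.
rewrite addnS; apply: (Concl_step (s' := s) (i := c)).
- by apply: hs; rewrite mem_obs ti.
- by rewrite mem_obs ci eqxx.
apply: (Concl_mono (V0 := V0) (H1 := H)); [by move=> y; left | by move=> ? |].
apply: IH.
  by move=> i lt; rewrite addSnnS; apply: hne.
by rewrite addSnnS.
Qed.

Fixpoint accp d t r pend :=
  if r is r'.+1 then accp d t.+1 r' (obs G t (pos (car d) t) ++ pend) else pend.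

Lemma mem_accp d t r pend j : j \in accp d t r pend ->
  j \in pend \/ exists2 m, m < r & j \in obs G (t + m) (pos (car d) (t + m)).
Proof.
elim: r t pend => [|r IH] t pend /=; first by left.
case/IH => [|[m mr hm]]; last by right; exists m.+1 => //; rewrite -addSnnS.
rewrite mem_cat => /orP[h|]; last by left.
by right; exists 0 => //; rewrite addn0.
Qed.

Lemma accp_mem d t r pend j m : m < r -> j \in obs G (t + m) (pos (car d) (t + m)) ->
  j \in accp d t r pend.
Proof.
have sub : forall t r pend j, j \in pend -> j \in accp d t r pend.
  move=> t' r'; elim: r' t' => [|r' IH] t' p j' //= h.
  by apply: IH; rewrite mem_cat h orbT.
elim: r t m pend => [//|r IH] t [|m] pend /= lt h.
  by apply: sub; rewrite mem_cat -(addn0 t) h.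
by apply: IH lt _; rewrite addSnnS.
Qed.

Lemma Concl_explore V0 d rest vis : d \in ids -> forall r, 0 < r ->
  forall s s1 t pend F H,
  step W s (obs G t (pos (car d) t)) = explore_step r s1 (obs G t (pos (car d) t)) ->
  scur s1 = d -> svis s1 = vis -> sstk s1 = (d, pend) :: rest ->
  Concl V0 (mkSt MDecide d vis ((d, accp d t r pend) :: rest)) (pos (car d) (t + r)) (t + r) F
     (fun y => H y \/ exists2 m, m < r & y = pos (car d) (t + m)) ->
  Concl V0 s (pos (car d) t) t (F + r) H.
Proof.
move=> di; elim=> [//|r IH] _ s s1 t pend F H hs hc hv hk hC.
rewrite addnS; move: hs; rewrite /explore_step hc hv hk => hs.
apply: (Concl_step hs); first by rewrite mem_obs di eqxx.
clear hs; case: r IH hC => [|r] IH hC /=.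
  move: hC; rewrite addn0 addn1 /=; apply: Concl_mono => // y [h|[m]]; first by left.
  by case: m => // _ ->; right; rewrite addn0.
apply: (IH _ _ (mkSt (MExplore r.+1) d vis ((d, obs G t (pos (car d) t) ++ pend) :: rest))) => //.
rewrite addSnnS; move: hC; apply: Concl_mono => // y [h|[[|m] lt ->]]; first by left; left.
  by left; right; rewrite addn0.
by right; exists m => //; rewrite addSnnS.
Qed.


Fixpoint chain (stk : seq (nat * seq nat)) : Prop :=
  match stk with
  | (c, _) :: (((p, _) :: _) as rest) => meets c p /\ chain rest
  | _ => True
  end.

Record Inv (s : St) (H : nat -> Prop) : Prop := InvI {
 i_uniq : uniq (svis s);
 i_ids : {subset svis s <= ids};
 i_top : exists pend rest, sstk s = (scur s, pend) :: rest;
 i_sv : {subset map fst (sstk s) <= svis s};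
 i_su : uniq (map fst (sstk s));
 i_ch : chain (sstk s);
 i_p1 : forall c pend, (c, pend) \in sstk s -> forall j, j \in pend -> j \in ids /\ meets c j;
 i_p2 : forall c pend, (c, pend) \in sstk s -> forall j, j \in ids -> meets c j -> j \in pend;
 i_fin : forall i, i \in svis s -> i \notin map fst (sstk s) ->
           forall j, j \in ids -> meets i j -> j \in svis s;
 i_cov : forall i, i \in svis s -> forall u, H (pos (car i) u) }.

Lemma first_meet c tau t : c \in ids -> tau \in ids -> meets c tau ->
  exists2 m0, m0 < W & pos (car tau) (t + m0) = pos (car c) (t + m0) /\
    forall i, i < m0 -> pos (car tau) (t + i) != pos (car c) (t + i).
Proof.
move=> ci ti mct; case: (meets_window t ci ti mct) => m mW hm.
have ex : exists m, pos (car tau) (t + m) == pos (car c) (t + m) by exists m; rewrite hm.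
case: (ex_minnP ex) => m0 /eqP h0 hmin; exists m0.
  by apply: leq_ltn_trans mW; apply: hmin; rewrite hm.
split=> // i lt; apply/negP => /hmin; by rewrite leqNgt lt.
Qed.

Lemma main N : forall s s1 t F H,
  2 * (size G - size (svis s1)) + size (sstk s1) <= N -> Inv s1 H ->
  step W s (obs G t (pos (car (scur s1)) t)) = decide s1 ->
  W * (3 * (size G - size (svis s1)) + size (sstk s1) - 1) <= F ->
  Concl (svis s1) s (pos (car (scur s1)) t) t F H.
Proof.
elim: N => [|N IH] s [md c vis stk] t F H /= hN hI hs hF;
  case: (i_top hI) => /= pend [rest ek]; subst stk.
  by rewrite /= addnS in hN.
have cvis : c \in vis by apply: (i_sv hI); rewrite /= inE eqxx.
have ci : c \in ids by apply: (i_ids hI).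
have cobs : c \in obs G t (pos (car c) t) by rewrite mem_obs ci eqxx.
have cpend : (c, pend) \in (c, pend) :: rest by rewrite inE eqxx.
move: hs; rewrite /decide /=.
case ef: [seq d <- pend | d \notin vis] => [|d l].
  have fe : forall j, j \in pend -> j \in vis.
    move=> j jp; apply/negPn/negP => nj.
    have : j \in [seq d <- pend | d \notin vis] by rewrite mem_filter nj jp.
    by rewrite ef.
  case: rest hN hI hF cpend => [|[p pp] rest] hN hI hF cpend hs.
    apply: (Concl_halt F hs); exists vis; split => //; first exact: (i_ids hI).
      move=> i iv j jj mij; case: (eqVneq i c) => [ei|ne].
        by subst i; apply: fe; apply: (i_p2 hI cpend).
      by apply: (i_fin hI iv) => //=; rewrite inE.
    by move=> i iv u; left; apply: (i_cov hI).
  move: hF => /= hF.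
  have [F' eF] : exists F', F = F'.+1.
    by apply: (arF HW _ hF); rewrite !addnS subn1.
  subst F.
  have pvis : p \in vis by apply: (i_sv hI); rewrite /= !inE eqxx orbT.
  have pi := i_ids hI pvis.
  have mcp : meets c p by case: (i_ch hI).
  apply: (Concl_step hs cobs) => /=.
  case: (first_meet t.+1 ci pi mcp) => m0 m0W [hm0 hlt].
  case: (fuel_ret (a := size G - size vis) (b := (size rest).+2) (F := F') isT m0W hF) => le1 le2.
  rewrite -(subnK le1).
  apply: (Concl_wait (tau := p) (c := c)) => //.
    by move=> o /negbTE po; rewrite /step /= po.
  rewrite -hm0.
  apply: (IH _ (mkSt MDecide p vis ((p, pp) :: rest))) => /=.
  - by apply: meas_ret.
  - apply: InvI => /=.
    + exact: (i_uniq hI).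
    + exact: (i_ids hI).
    + by exists pp, rest.
    + by move=> i ii; apply: (i_sv hI); rewrite /= inE ii orbT.
    + by case/andP: (i_su hI).
    + by case: (i_ch hI).
    + by move=> c' pd hin; apply: (i_p1 hI); rewrite inE hin orbT.
    + by move=> c' pd hin; apply: (i_p2 hI); rewrite inE hin orbT.
    + move=> i iv ni j jj mij; case: (eqVneq i c) => [ei|ne].
        by subst i; apply: fe; apply: (i_p2 hI cpend).
      by apply: (i_fin hI iv) => //=; rewrite inE (negbTE ne).
    + by move=> i iv u; left; apply: (i_cov hI).
  - by rewrite /step /= mem_obs pi eqxx.
  - exact: le2.
move=> hs.
have dfil : d \in [seq d <- pend | d \notin vis] by rewrite ef inE eqxx.
rewrite mem_filter in dfil; case/andP: dfil => dnv dp.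
case: (i_p1 hI cpend dp) => di mcd.
have szlt : size vis < size G.
  have u : uniq (d :: vis) by rewrite /= dnv (i_uniq hI).
  have sub : {subset d :: vis <= ids}.
    by move=> i; rewrite inE => /predU1P[->//|]; apply: (i_ids hI).
  by move: (uniq_leq_size u sub); rewrite size_map.
have apos : 0 < size G - size vis by rewrite subn_gt0.
have [F' eF] : exists F', F = F'.+1 by apply: (arF HW (pos3 _ apos) hF).
subst F.
apply: (Concl_step hs cobs) => /=.
case: (first_meet t.+1 ci di mcd) => m0 m0W [hm0 hlt].
case: (fuel_seek (a := size G - size vis) (b := (size rest).+1) (F := F') apos m0W hF) => le1 le2 le3.
rewrite -(subnK le1).
apply: (Concl_wait (tau := d) (c := c)) => //.
  by move=> o /negbTE po; rewrite /step /= po.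
rewrite -hm0.
apply: (Concl_mono (V0 := d :: vis) (H1 := fun y => H y \/ y = pos (car c) t)) => //.
  by move=> i iv; rewrite inE iv orbT.
rewrite -(subnK le2).
set t' := t.+1 + m0.
apply: (@Concl_explore (d :: vis) d ((c, pend) :: rest) (d :: vis) di W HW _
   (mkSt MDecide d (d :: vis) ((d, [::]) :: (c, pend) :: rest)) t' [::]) => //.
  by rewrite /step /= mem_obs di eqxx.
apply: (IH _ (mkSt MDecide d (d :: vis) ((d, accp d t' W [::]) :: (c, pend) :: rest))) => /=.
- by rewrite subnS; apply: meas_seek.
- apply: InvI => /=.
  + by rewrite dnv (i_uniq hI).
  + by move=> i; rewrite inE => /predU1P[->//|]; apply: (i_ids hI).
  + by exists (accp d t' W [::]), ((c, pend) :: rest).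
  + move=> i; rewrite inE => /predU1P[->|ii]; first by rewrite inE eqxx.
    by rewrite inE (i_sv hI ii) orbT.
  + apply/andP; split; last exact: (i_su hI).
    apply/negP => /(i_sv hI); by rewrite (negbTE dnv).
  + by split; [apply: meets_sym | exact: (i_ch hI)].
  + move=> c' pd; rewrite inE => /predU1P[[-> ->]|hin]; last exact: (i_p1 hI hin).
    move=> j /mem_accp [//|[m mW]]; rewrite mem_obs => /andP[jj /eqP e].
    by split=> //; exists (t' + m).
  + move=> c' pd; rewrite inE => /predU1P[[-> ->]|hin]; last exact: (i_p2 hI hin).
    move=> j jj mdj; case: (meets_window t' di jj mdj) => m mW e.
    by apply: (@accp_mem d t' W [::] j m mW); rewrite mem_obs jj e eqxx.
  + move=> i; rewrite inE => /predU1P[->|iv] ni; first by rewrite inE eqxx in ni.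
    move: ni; rewrite inE negb_or => /andP[_ ni] j jj mij.
    by rewrite inE (i_fin hI iv ni jj mij) orbT.
  + move=> i; rewrite inE => /predU1P[->|iv] u.
      by case: (cover_window t' u di) => m mW e; right; exists m.
    by left; left; apply: (i_cov hI).
- by rewrite /step.
- have e : size G - (size vis).+1 = (size G - size vis).-1 by rewrite subnS.
  by rewrite e.
Qed.


Lemma walk_cov (Vf v : seq nat) : closedV Vf -> {subset Vf <= ids} ->
  (forall i, i \in Vf -> forall u, False \/ pos (car i) u \in v) ->
  forall cs x t, valid_walk G x t cs -> (exists2 j, j \in Vf & pos (car j) t = x) ->
  forall y, y \in walk_sites x t cs -> y \in v.
Proof.
move=> cl sids cov; elim=> [|c cs IH] x t /=.
  move=> _ [j jV <-] y; rewrite inE => /eqP ->.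
  by case: (cov j jV t).
case/and3P=> cG /eqP pc vw [j jV pj] y; rewrite inE => /predU1P[->|yw].
  by rewrite -pj; case: (cov j jV t).
apply: (IH _ _ vw) yw; exists (cid c); last by rewrite car_cid.
apply: (cl j jV); first exact: map_f.
by exists t; rewrite car_cid // pc pj.
Qed.

Lemma top n x0 : x0 \in start G -> feasible n G ->
  exists v, runM W G s0 x0 0 ((3 * size G - 2) * W) = Some v /\ forall y, y < n -> y \in v.
Proof.
case/mapP=> c0 c0G ex0 hfeas.
have : cid c0 \in obs G 0 x0 by rewrite mem_obs map_f // car_cid // ex0 eqxx.
case Eo: (obs G 0 x0) => [//|i l] _.
have iobs : i \in obs G 0 x0 by rewrite Eo inE eqxx.
move: iobs; rewrite mem_obs => /andP[ii /eqP px].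
have kpos : 0 < size G by case: (G) c0G.
have hs : step W s0 (obs G 0 (pos (car i) 0)) =
    explore_step W (mkSt MDecide i [:: i] [:: (i, [::])]) (obs G 0 (pos (car i) 0)).
  by rewrite px Eo.
have C : Concl [:: i] s0 (pos (car i) 0) 0 ((3 * size G - 2) * W) (fun _ => False).
  rewrite (fuel_top W kpos).
  apply: (@Concl_explore [:: i] i [::] [:: i] ii W HW s0
     (mkSt MDecide i [:: i] [:: (i, [::])]) 0 [::]) => //.
  apply: (@main (2 * size G + 1) _ (mkSt MDecide i [:: i] [:: (i, accp i 0 W [::])])) => /=.
  - exact: meas_top.
  - apply: InvI => /=.
    + by [].
    + by move=> j; rewrite inE => /eqP ->.
    + by exists (accp i 0 W [::]), [::].
    + by move=> j.
    + by [].
    + by [].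
    + move=> c' pd; rewrite inE => /eqP [-> ->].
      move=> j /mem_accp [//|[m mW]]; rewrite mem_obs => /andP[jj /eqP e].
      by split=> //; exists (0 + m).
    + move=> c' pd; rewrite inE => /eqP [-> ->].
      move=> j jj mdj; case: (meets_window 0 ii jj mdj) => m mW e.
      by apply: (@accp_mem i 0 W [::] j m mW); rewrite mem_obs jj e eqxx.
    + by move=> j jv nj; rewrite jv in nj.
    + move=> j; rewrite inE => /eqP -> u.
      by case: (cover_window 0 u ii) => m mW e; right; exists m.
  - by [].
  - by [].
case: C => v [ev [Vf [sub sids cl cov]]].
exists v; split; first by rewrite -px.
move=> y yn.
have iG := (car_in ii).1.
case: (hfeas _ iG) => cs [vw hw].
apply: (walk_cov cl sids _ vw) (hw y yn).
  by move=> j /cov h u; case: (h u) => [[]|]; right.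
by exists i; [apply: sub; rewrite inE eqxx|].
Qed.

End Proofs.

Lemma pos_per c u k : pos c (u + k * cperiod c) = pos c u.
Proof. by rewrite /pos addnC modnMDl. Qed.

Lemma period_le G B c : period G <= B -> c \in G -> cperiod c <= B.
Proof.
move=> hp cG; apply: leq_trans hp.
exact: (@leq_bigmax_seq _ G xpredT cperiod c cG isT).
Qed.

Theorem mainTheorem9 :
  (forall B : nat, 1 <= B ->
     exists A : algorithm,
       forall (n : nat) (G : seq carrier),
         pv_system n G -> feasible n G -> period G <= B ->
         explores_within A n G ((3 * size G - 2) * B ^ 2))
  /\
  (forall B : nat, 1 <= B ->
     exists A : algorithm,
       forall (n : nat) (G : seq carrier),
         pv_system n G -> homogeneous G -> feasible n G -> period G <= B ->
         explores_within A n G ((3 * size G - 2) * B)).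
Proof.
split=> B B1.
- exists (Alg (B ^ 2)) => n G hpv hfe hper x0 hx0.
  case/and4P: hpv => hu hp _ _.
  rewrite run_runM.
  apply: (top (W := B ^ 2)) => //; first by rewrite expn_gt0 B1.
  move=> c d cG dG; exists (cperiod c * cperiod d).
    rewrite muln_gt0 (allP hp c cG) (allP hp d dG) /= (expnS B 1) expn1.
    by apply: leq_mul; apply: (period_le hper).
  move=> u; split; last exact: pos_per.
  by rewrite mulnC pos_per.
- exists (Alg B) => n G hpv hhom hfe hper x0 hx0.
  case/and4P: hpv => hu hp _ _.
  rewrite run_runM.
  apply: (top (W := B)) => //.
  move=> c d cG dG; exists (cperiod c).
    by rewrite (allP hp c cG) /=; apply: (period_le hper).
  have e : cperiod c = cperiod d by apply/eqP; apply: (allP (allP hhom c cG) d dG).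
  move=> u; split; first by rewrite -(mul1n (cperiod c)) pos_per.
  by rewrite e -(mul1n (cperiod d)) pos_per.
Qed.
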